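(* Let $m>0$, $n$ an odd positive integer, $V=[-m/2,m/2]$. For every dataset $D\in V^n$ and every $\ell\in V$, $$\mathrm{SWDIFF}(D,\ell)=|\mathcal{T}(D)-\ell|+2\sum_{j\in C(D,\ell)}|x_j-\ell|,$$ where $C(D,\ell)$ is the set of crossed agents.
   Context: A dataset is $D=(x_1,\dots,x_n)\in V^n$ of agent locations, indexed so that $x_1\le\dots\le x_n$. The optimal facility location is the median $\mathcal{T}(D)=x_{\lceil n/2\rceil}$. The social welfare of a facility at $\ell$ is $s(D,\ell)=-\sum_{i=1}^n|x_i-\ell|$, and $\mathrm{SWDIFF}(D,\ell)=s(D,\mathcal{T}(D))-s(D,\ell)$. The set of crossed agents is $C(D,\ell)=\{i: i<\lceil n/2\rceil,\ x_i\in[\ell,\mathcal{T}(D)]\}$ if $\ell<\mathcal{T}(D)$; $C(D,\ell)=\{i: i>\lceil n/2\rceil,\ x_i\in[\mathcal{T}(D),\ell]\}$ if $\ell>\mathcal{T}(D)$; and $C(D,\ell)=\emptyset$ if $\ell=\mathcal{T}(D)$. *)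

(* Defs.v *)
From mathcomp Require Import all_boot all_order all_algebra.
Set Implicit Arguments. Unset Strict Implicit. Unset Printing Implicit Defensive.
Import Order.TTheory GRing.Theory Num.Theory.
Local Open Scope ring_scope.

(* A dataset D = (x_1,...,x_n) is a sequence s with s`_(i-1) = x_i
   (0-based positions in Rocq). *)

(* 0-based position of the median: ceil(n/2) - 1. *)
Definition medidx (n : nat) : nat := ((n.+1)./2).-1.

Section Defs.
Variable R : realFieldType.

Definition optT (s : seq R) : R := s`_(medidx (size s)).

Definition sw (s : seq R) (l : R) : R := - \sum_(i < size s) `|s`_i - l|.

Definition swdiff (s : seq R) (l : R) : R := sw s (optT s) - sw s l.

Definition crossed (s : seq R) (l : R) (i : nat) : bool :=
  if l < optT s then (i < medidx (size s))%N && (l <= s`_i <= optT s)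
  else if optT s < l then (medidx (size s) < i)%N && (optT s <= s`_i <= l)
  else false.

End Defs.

(* Main.v *)
Require Import Defs.
From mathcomp Require Import all_boot all_order all_algebra.
From mathcomp Require Import zify ring lra.
Import Order.TTheory GRing.Theory Num.Theory.
Local Open Scope ring_scope.

Lemma absP (R : realFieldType) (a b : R) : b <= a -> `|a - b| = a - b.
Proof. by move=> h; rewrite ger0_norm // subr_ge0. Qed.
Lemma absN (R : realFieldType) (a b : R) : a <= b -> `|a - b| = b - a.
Proof. by move=> h; rewrite ler0_norm ?opprB // subr_le0. Qed.

Arguments absP {R a b}.
Arguments absN {R a b}.

Lemma sum_eps1 (R : realFieldType) (k n : nat) : n = k.*2.+1 ->
  \sum_(i < n) (if (k <= i)%N then 1 else -1 : R) = 1.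
Proof.
move=> ->.
rewrite -(big_mkord xpredT (fun i => if (k <= i)%N then 1 else -1 : R)).
rewrite (big_cat_nat (n := k)) //=; last by lia.
rewrite (eq_big_nat _ _ (F2 := fun _ => -1 : R)); last first.
  by move=> i /andP[_ h]; rewrite leqNgt h.
rewrite [X in _ + X](eq_big_nat _ _ (F2 := fun _ => 1 : R)); last first.
  by move=> i /andP[h _]; rewrite h.
rewrite !sumr_const_nat.
have -> : (k.*2.+1 - k = k.+1)%N by lia.
by rewrite subn0 mulrSr; lra.
Qed.

Lemma sum_eps2 (R : realFieldType) (k n : nat) : n = k.*2.+1 ->
  \sum_(i < n) (if (i <= k)%N then 1 else -1 : R) = 1.
Proof.
move=> ->.
rewrite -(big_mkord xpredT (fun i => if (i <= k)%N then 1 else -1 : R)).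
rewrite (big_cat_nat (n := k.+1)) //=; last by lia.
rewrite (eq_big_nat _ _ (F2 := fun _ => 1 : R)); last first.
  by move=> i /andP[_ h]; rewrite ifT.
rewrite [X in _ + X](eq_big_nat _ _ (F2 := fun _ => -1 : R)); last first.
  by move=> i /andP[h _]; rewrite leqNgt h.
rewrite !sumr_const_nat.
have -> : (k.*2.+1 - k.+1 = k)%N by lia.
by rewrite subn0 mulrSr; lra.
Qed.

Theorem theorem4p3 (R : realFieldType) (m : R) (n : nat) (s : seq R) (l : R) :
  0 < m -> (0 < n)%N -> odd n -> size s = n ->
  sorted <=%R s ->
  all (fun x => (- (m / 2) <= x) && (x <= m / 2)) s ->
  - (m / 2) <= l <= m / 2 ->
  swdiff s l = `|optT s - l| + 2 * \sum_(i < size s | crossed s l i) `|s`_i - l|.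
Proof.
move=> _ _ hodd hn hsort _ _.
have mono : forall i j, (i <= j)%N -> (j < size s)%N -> s`_i <= s`_j.
  move=> i j hij hj.
  apply: (sorted_leq_nth le_trans lexx 0 hsort) => //; rewrite inE /=; lia.
set k := medidx (size s).
have hk : size s = k.*2.+1 by rewrite /k /medidx; lia.
have hT : optT s = s`_k by [].
rewrite /swdiff /sw opprK addrC -sumrB.
rewrite mulr_sumr [X in _ + X]big_mkcond /=.
case: (ltgtP l (optT s)) => hlT.
  rewrite -[X in X + _]mulr1 -{1}(@sum_eps1 R _ _ hk) mulr_sumr -big_split /=.
  apply: eq_bigr => i _.
  rewrite /crossed hlT -/k hT; rewrite hT in hlT.
  have hi := ltn_ord i.
  case: (leqP k i) => hki.
  + have hx : s`_k <= s`_i by apply: mono.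
    rewrite absP ?absP //; [|lra|lra]. rewrite mulr1 /=. lra.
  + have hx : s`_i <= s`_k by apply: mono => //; lia.
    rewrite /= (absP (ltW hlT)) [`|s`_i - s`_k|]absN //.
    case: (leP l (s`_i)) => hl /=.
    * rewrite hx absP //. lra.
    * rewrite absN; [lra|lra].
- rewrite -[X in X + _]mulr1 -{1}(@sum_eps2 R _ _ hk) mulr_sumr -big_split /=.
  apply: eq_bigr => i _.
  rewrite /crossed hlT ltNge (ltW hlT) /= -/k hT; rewrite hT in hlT.
  have hi := ltn_ord i.
  case: (leqP i k) => hki.
  + have hx : s`_i <= s`_k by apply: mono; lia.
    rewrite (absN (ltW hlT)) absN ?absN //; [|lra]. rewrite mulr1 /=. lra.
  + have hx : s`_k <= s`_i by apply: mono => //; lia.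
    rewrite /= (absN (ltW hlT)) [`|s`_i - s`_k|]absP //.
    case: (leP (s`_i) l) => hl /=.
    * rewrite hx absN // /=. lra.
    * rewrite andbF absP /=; lra.
- rewrite -hlT subrr normr0 add0r big1 => [|i _]; last by rewrite subrr.
  by rewrite big1 // => i _; rewrite /crossed -hlT ltxx.
Qed.
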